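(* Let $(M,J)$ be a closed almost complex manifold. $J$ being pure is equivalent to $\iota_{1,1}$ being injective, which is also equivalent to $\iota_{(2,0),(0,2)}$ being injective. If $J$ is full then both $\iota_{1,1}$ and $\iota_{(2,0),(0,2)}$ are surjective. Consequently, if $J$ is pure and full, then both $\iota_{1,1}$ and $\iota_{(2,0),(0,2)}$ are isomorphisms.
   Context: $\mathcal E_2(M)$ is the space of real 2-currents (continuous linear functionals on smooth real 2-forms with the $C^\infty$ topology), with boundary operator $d$ dual to exterior derivative. It splits as $\mathcal E_{1,1}\oplus\mathcal E_{(2,0),(0,2)}$, where $\mathcal E_{1,1}$ (resp. $\mathcal E_{(2,0),(0,2)}$) consists of currents vanishing on all real 2-forms $\alpha$ with $\alpha(Jv,Jw)=-\alpha(v,w)$ (resp. $=\alpha(v,w)$); $\pi_{1,1},\pi_{(2,0),(0,2)}$ are the projections. $\mathcal Z\subset\mathcal E_2(M)$ is the space of closed 2-currents and $\mathcal B=d\mathcal E_3(M)$ the boundaries; for $S=(1,1)$ or $(2,0),(0,2)$, $\mathcal Z_S=\mathcal Z\cap\mathcal E_S$, $\mathcal B_S=\mathcal B\cap\mathcal E_S$, and $\iota_S:\mathcal Z_S/\mathcal B_S\to\pi_S\mathcal Z/\pi_S\mathcal B$ is induced by inclusion. $H^J_S(M)_{\mathbb R}=\mathcal Z_S/\mathcal B_S$, viewed as a subspace of de Rham homology $H_2(M;\mathbb R)=\mathcal Z/\mathcal B$. $J$ is pure if $H^J_{1,1}(M)_{\mathbb R}\cap H^J_{(2,0),(0,2)}(M)_{\mathbb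 R}=0$, and full if $H^J_{1,1}(M)_{\mathbb R}+H^J_{(2,0),(0,2)}(M)_{\mathbb R}=H_2(M;\mathbb R)$. *)

(* Defs.v *)
From HB Require Import structures.
From mathcomp Require Import all_boot all_order all_algebra.
Set Implicit Arguments. Unset Strict Implicit. Unset Printing Implicit Defensive.
Import GRing.Theory.
Local Open Scope ring_scope.

Section Currents.
Variables (R : realFieldType) (E1 E2 E3 : lmodType R).
Variables (d2 : E2 -> E1) (d3 : E3 -> E2).

(* Z = closed 2-currents, B = boundaries d E_3 *)
Definition cyc (x : E2) : Prop := d2 x = 0.
Definition bdry (x : E2) : Prop := exists y : E3, x = d3 y.

(* E_S = image of the projection pS (pS x = x);  Z_S = Z ∩ E_S, B_S = B ∩ E_S *)
Definition cycS (pS : E2 -> E2) (x : E2) : Prop := cyc x /\ pS x = x.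
Definition bdryS (pS : E2 -> E2) (x : E2) : Prop := bdry x /\ pS x = x.
Definition piZ (pS : E2 -> E2) (w : E2) : Prop := exists z, cyc z /\ w = pS z.
Definition piB (pS : E2 -> E2) (w : E2) : Prop := exists b : E3, w = pS (d3 b).

(* iota_S : Z_S/B_S -> pi_S Z / pi_S B, [x] |-> [x].
   Two classes [x],[y] (x,y in Z_S) are equal in the target iff x - y in pi_S B,
   and equal in the source iff x - y in B_S. *)
Definition iota_injective (pS : E2 -> E2) : Prop :=
  forall x y, cycS pS x -> cycS pS y -> piB pS (x - y) -> bdryS pS (x - y).
Definition iota_surjective (pS : E2 -> E2) : Prop :=
  forall w, piZ pS w -> exists x, cycS pS x /\ piB pS (w - x).

(* H_S = (Z_S + B)/B inside H_2 = Z/B. *)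
(* pure: H_{1,1} ∩ H_{(2,0),(0,2)} = 0 *)
Definition pure (p11 p20 : E2 -> E2) : Prop :=
  forall x y, cycS p11 x -> cycS p20 y -> bdry (x - y) -> bdry x.
(* full: H_{1,1} + H_{(2,0),(0,2)} = H_2 *)
Definition full (p11 p20 : E2 -> E2) : Prop :=
  forall z, cyc z -> exists x y, [/\ cycS p11 x, cycS p20 y & bdry (z - (x + y))].

End Currents.

(* Main.v *)
Require Import Defs.
From HB Require Import structures.
From mathcomp Require Import all_boot all_order all_algebra.
Import GRing.Theory.
Local Open Scope ring_scope.

Theorem lemma2p18 (R : realFieldType) (E1 E2 E3 : lmodType R)
  (d2 : {linear E2 -> E1}) (d3 : {linear E3 -> E2})
  (p11 p20 : {linear E2 -> E2})
  (dd : forall y : E3, d2 (d3 y) = 0)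
  (psum : forall x : E2, p11 x + p20 x = x)
  (pidem : forall x : E2, p11 (p11 x) = p11 x) :
  [/\ (pure d2 d3 p11 p20 <-> iota_injective d2 d3 p11),
      (pure d2 d3 p11 p20 <-> iota_injective d2 d3 p20),
      (full d2 d3 p11 p20 ->
         iota_surjective d2 d3 p11 /\ iota_surjective d2 d3 p20) &
      (pure d2 d3 p11 p20 /\ full d2 d3 p11 p20 ->
         (iota_injective d2 d3 p11 /\ iota_surjective d2 d3 p11) /\
         (iota_injective d2 d3 p20 /\ iota_surjective d2 d3 p20))].
Proof.
have p20E : forall x, p20 x = x - p11 x.
  by move=> x; rewrite -{2}(psum x) addrC addKr.
have p1120 : forall x, p11 (p20 x) = 0.
  by move=> x; rewrite p20E linearB pidem subrr.
have p2020 : forall x, p20 (p20 x) = p20 x.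
  by move=> x; rewrite [LHS]p20E p1120 subr0.
have p2011 : forall x, p20 (p11 x) = 0.
  by move=> x; rewrite p20E pidem subrr.
have bD : forall u v, bdry d3 u -> bdry d3 v -> bdry d3 (u + v).
  by move=> u v [a ->] [b ->]; exists (a + b); rewrite linearD.
have bN : forall u, bdry d3 u -> bdry d3 (- u).
  by move=> u [a ->]; exists (- a); rewrite linearN.
have pure_inj11 : pure d2 d3 p11 p20 <-> iota_injective d2 d3 p11.
  split.
  - move=> P x y [cx px] [cy py] [b hb].
    have hu : cycS d2 p11 (x - y).
      by split; rewrite /cyc ?linearB ?cx ?cy ?subrr // px py.
    split; last by case: hu.
    apply: (P (x - y) (- p20 (d3 b))) => //.
    + split; first by rewrite /cyc linearN p20E linearB dd -hb (proj1 hu) subrr oppr0.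
      by rewrite linearN p2020.
    + by exists b; rewrite opprK p20E hb addrC addrNK.
  - move=> I x y [cx px] [cy py] [b hb].
    have h := I x 0.
    rewrite subr0 in h; apply: (proj1 (h _ _ _)).
    + by split.
    + by split; rewrite /cyc ?linear0.
    + by exists b; rewrite -hb linearB px -py p1120 subr0.
have pure_inj20 : pure d2 d3 p11 p20 <-> iota_injective d2 d3 p20.
  split.
  - move=> P x y [cx px] [cy py] [b hb].
    have hu : cycS d2 p20 (x - y).
      by split; rewrite /cyc ?linearB ?cx ?cy ?subrr // px py.
    split; last by case: hu.
    have h11 : cycS d2 p11 (p11 (d3 b)).
      split; last by rewrite pidem.
      have -> : p11 (d3 b) = d3 b - p20 (d3 b).
        by rewrite -{2}(psum (d3 b)) addrK.
      by rewrite /cyc linearB dd -hb (proj1 hu) subrr.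
    have hb11 : bdry d3 (p11 (d3 b)).
      apply: (P _ (- (x - y))) => //.
      + split; first by rewrite /cyc linearN (proj1 hu) oppr0.
        by rewrite linearN (proj2 hu).
      + by exists b; rewrite opprK hb psum.
    have -> : x - y = d3 b - p11 (d3 b).
      by rewrite hb -{2}(psum (d3 b)) addrC addKr.
    by apply: bD; [exists b | apply: bN].
  - move=> I x y [cx px] [cy py] [b hb].
    have h := I (- y) 0.
    rewrite subr0 in h.
    have hy : bdry d3 (- y).
      apply: (proj1 (h _ _ _)).
      + by split; rewrite ?/cyc linearN ?cy ?oppr0 ?py.
      + by split; rewrite /cyc ?linear0.
      + by exists b; rewrite -hb linearB py p20E px subrr sub0r.
    have -> : x = (x - y) + (- - y) by rewrite opprK subrK.
    by apply: bD; [exists b | apply: bN].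
have surj : full d2 d3 p11 p20 ->
    iota_surjective d2 d3 p11 /\ iota_surjective d2 d3 p20.
  move=> F; split.
  - move=> w [z [cz ->]].
    have [x [y [hx hy [c hc]]]] := F z cz.
    exists x; split => //; exists c.
    rewrite -hc linearB linearD (proj2 hx).
    have -> : p11 y = 0 by rewrite -(proj2 hy) p1120.
    by rewrite addr0.
  - move=> w [z [cz ->]].
    have [x [y [hx hy [c hc]]]] := F z cz.
    exists y; split => //; exists c.
    rewrite -hc linearB linearD (proj2 hy).
    have -> : p20 x = 0 by rewrite -(proj2 hx) p2011.
    by rewrite add0r.
split => //.
move=> [P F]; have [S1 S2] := surj F.
by split; split => //; [apply/pure_inj11 | apply/pure_inj20].
Qed.
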